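(* The class of threshold graphs is degree sandwich monotone; that is, for every threshold graph $G$ and every set $F\subseteq E(G)$ such that $G-F$ is threshold, every degree-minimal edge $e$ in $F$ satisfies that $G-e$ is threshold.
   Context: A graph $G=(V,E)$ is threshold if there exist a labeling $\ell:V\to\mathbb{N}_0$ and $t\in\mathbb{N}_0$ such that $X\subseteq V$ is independent iff $\sum_{x\in X}\ell(x)\le t$. Given a graph $G$ and $F\subseteq E(G)$, an edge $e\in F$ is degree-minimal in $F$ if its endpoints can be named $u,v$ so that (i) $u$ has the smallest degree in $G$ among all vertices incident to an edge of $F$, and (ii) $v$ has the smallest degree in $G$ among all vertices $w$ with $uw\in F$. *)

(* Defs.v *)
(* A finite simple graph on vertex type T is given by its
   edge set E : {set {set T}}, every edge being a 2-element subset of T. *)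
From mathcomp Require Import all_boot.
Set Implicit Arguments. Unset Strict Implicit. Unset Printing Implicit Defensive.

Section Graphs.
Variable T : finType.

Definition simple_graph (E : {set {set T}}) : bool :=
  [forall e in E, #|e| == 2].

Definition deg (E : {set {set T}}) (x : T) : nat :=
  #|[set e in E | x \in e]|.

Definition independent (E : {set {set T}}) (X : {set T}) : bool :=
  [forall e in E, ~~ (e \subset X)].

Definition threshold (E : {set {set T}}) : Prop :=
  exists (l : T -> nat) (t : nat),
    forall X : {set T}, independent E X = (\sum_(x in X) l x <= t).

Definition degree_minimal (E F : {set {set T}}) (e : {set T}) : Prop :=
  e \in F /\
  exists u v : T,
    [/\ e = [set u; v],
        (forall w : T, (exists2 f, f \in F & w \in f) -> deg E u <= deg E w)
      & (forall w : T, [set u; w] \in F -> deg E v <= deg E w)].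
End Graphs.

(* Main.v *)
Require Import Defs.
From mathcomp Require Import all_boot.
From mathcomp Require Import zify.
Set Implicit Arguments. Unset Strict Implicit. Unset Printing Implicit Defensive.

Section Aux.
Variable T : finType.
Implicit Types (E : {set {set T}}).

Definition noAP4 E := forall a b c d : T, a != c -> b != d ->
  [set a; b] \in E -> [set c; d] \in E -> [set a; c] \notin E -> [set b; d] \notin E -> False.

Definition NS E (S : {set T}) (w : T) := [set w' in S | [set w; w'] \in E].

Lemma simpleP E e : simple_graph E -> e \in E -> #|e| = 2.
Proof. by move=> /forall_inP H /H /eqP. Qed.

Lemma simple_sub E E' : simple_graph E -> E' \subset E -> simple_graph E'.
Proof.
move=> /forall_inP H sub; apply/forall_inP => e eE'.
exact: H (subsetP sub e eE').
Qed.

Lemma edge_neq E a b : simple_graph E -> [set a; b] \in E -> a != b.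
Proof.
move=> sE H; apply/negP => /eqP ab; move: (simpleP sE H).
by rewrite ab setUid cards1.
Qed.

Lemma key E (S : {set T}) x y z : simple_graph E -> noAP4 E -> x \in S -> y \in S -> z \in S ->
  [set x; z] \in E -> [set y; z] \notin E -> z != y -> x != y ->
  #|NS E S y| < #|NS E S x|.
Proof.
move=> sE nE xS yS zS xz yz zy xy.
have sub : NS E S y :\ x \proper NS E S x :\ y.
  apply/properP; split.
    apply/subsetP => w; rewrite !inE => /andP [wx /andP [wS yw]].
    rewrite wS /=.
    have -> : w != y by rewrite eq_sym (edge_neq sE yw).
    case: (boolP ([set x; w] \in E)) => // xw; exfalso.
    apply: (nE x z w y) => //; first by rewrite eq_sym.
      by rewrite setUC.
    by rewrite setUC.
  exists z; first by rewrite !inE zy zS xz.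
  by rewrite !inE (negbTE yz) !andbF.
have := proper_card sub.
rewrite (cardsD1 x (NS E S y)) (cardsD1 y (NS E S x)).
have -> : (x \in NS E S y) = (y \in NS E S x) by rewrite !inE xS yS setUC.
by rewrite ltn_add2l.
Qed.

Lemma deg_NS E w : simple_graph E -> deg E w = #|NS E setT w|.
Proof.
move=> sE; rewrite /deg.
have -> : [set e in E | w \in e] = [set [set w; w'] | w' in NS E setT w].
  apply/setP => e; rewrite !inE; apply/andP/imsetP.
  - case=> eE we.
    move: (simpleP sE eE) => /eqP /cards2P [p [q [pq ee]]].
    move: we; rewrite ee !inE => /orP [/eqP wp|/eqP wq].
      exists q; [by rewrite !inE wp -ee eE | by rewrite wp].
    exists p; [by rewrite !inE wq setUC -ee eE | by rewrite wq setUC].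
  - case=> w'; rewrite inE => /andP [_ H] ->; split => //; by rewrite set21.
rewrite card_in_imset // => a b; rewrite !inE => /andP [_ ha] /andP [_ hb] eq.
have : a \in [set w; b] by rewrite -eq set22.
rewrite !inE => /orP [/eqP aw|/eqP //].
by subst a; move: (edge_neq sE ha); rewrite eqxx.
Qed.

Lemma sum2 (l : T -> nat) a c : a != c -> \sum_(x in [set a; c]) l x = l a + l c.
Proof.
move=> ac; rewrite (big_setD1 a) ?set21 //.
have -> : [set a; c] :\ a = [set c].
  apply/setP => x; rewrite !inE.
  case: (eqVneq x a) => [->|] /=; first by rewrite (negbTE ac).
  by move=> _.
by rewrite /= big_set1.
Qed.

Lemma indep2 E a c : simple_graph E -> a != c ->
  independent E [set a; c] = ([set a; c] \notin E).
Proof.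
move=> sE ac; rewrite /independent; apply/forall_inP/idP.
- move=> H; apply/negP => Hin; by move: (H _ Hin); rewrite subxx.
- move=> Hn e eE; apply/negP => sub.
  have ee : e = [set a; c].
    apply/eqP; by rewrite eqEcard sub /= (simpleP sE eE) cards2 ac.
  by rewrite -ee eE in Hn.
Qed.

Lemma thr_noAP4 E : simple_graph E -> threshold E -> noAP4 E.
Proof.
move=> sE [l [t Ht]] a b c d ac bd ab cd nac nbd.
have ab' := edge_neq sE ab. have cd' := edge_neq sE cd.
have h1 := Ht [set a; c]. rewrite indep2 // nac sum2 // in h1.
have h2 := Ht [set b; d]. rewrite indep2 // nbd sum2 // in h2.
have h3 := Ht [set a; b]. rewrite indep2 // ab sum2 // in h3.
have h4 := Ht [set c; d]. rewrite indep2 // cd sum2 // in h4.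
move: h1 h2 h3 h4 => /esym h1 /esym h2 /esym/negbT h3 /esym/negbT h4.
rewrite -ltnNge in h3; rewrite -ltnNge in h4.
lia.
Qed.

Lemma iso_or_dom E (S : {set T}) : simple_graph E -> noAP4 E -> S != set0 ->
  exists x, x \in S /\ ((forall z, z \in S -> [set x; z] \notin E) \/
                        (forall z, z \in S -> z != x -> [set x; z] \in E)).
Proof.
move=> sE nE /set0Pn [x0 x0S].
have [x xS xmax] : exists2 x, x \in S & forall z, z \in S -> #|NS E S z| <= #|NS E S x|.
  case: (@arg_maxnP _ x0 (mem S) (fun x => #|NS E S x|)) => // x xS xmax.
  by exists x.
case: (boolP [forall z in S, (z != x) ==> ([set x; z] \in E)]) => [/forall_inP H|].
  exists x; split => //; right => z zS zx; exact: (implyP (H z zS)).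
move=> /forall_inPn [y yS]; rewrite negb_imply => /andP [yx nxy].
exists y; split => //; left => z zS; apply/negP => yz.
have zx : z != x.
  apply/negP => /eqP zx; subst z; by rewrite setUC yz in nxy.
have := key sE nE zS xS yS _ nxy yx zx.
rewrite setUC yz => /(_ erefl).
by rewrite ltnNge xmax.
Qed.

Definition thrS E (S : {set T}) := exists (l : T -> nat) (t : nat), forall X : {set T},
  X \subset S -> independent E X = (\sum_(x in X) l x <= t).

Lemma noAP4_thrS E : simple_graph E -> noAP4 E -> forall S, thrS E S.
Proof.
move=> sE nE S; have [n ltS] := ubnP #|S|; elim: n S ltS => // n IH S ltS.
case: (eqVneq S set0) => [->|S0].
  exists (fun _ => 0), 0 => X; rewrite subset0 => /eqP ->.
  rewrite big_set0 leqnn; apply/forall_inP => e eE; apply/negP.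
  rewrite subset0 => /eqP e0; move: (simpleP sE eE); by rewrite e0 cards0.
have [x [xS [iso|dom]]] := iso_or_dom sE nE S0.
- have [l [t Ht]] : thrS E (S :\ x).
    apply: IH; by rewrite (cardsD1 x S) xS add1n ltnS in ltS.
  exists (fun y => if y == x then 0 else l y), t => X XS.
  have e1 : independent E X = independent E (X :\ x).
    rewrite /independent; apply/forall_inP/forall_inP => H e eE; apply/negP => sub.
      move/negP: (H e eE); apply; exact: subset_trans sub (subsetDl _ _).
    case: (boolP (x \in e)) => xe.
      move: (simpleP sE eE) => /eqP /cards2P [p [q [pq ee]]].
      move: (xe); rewrite ee !inE => /orP [/eqP xp|/eqP xq].
        subst p.
        have qS : q \in S by apply: (subsetP XS); apply: (subsetP sub); rewrite ee set22.
        by move: (iso q qS); rewrite -ee eE.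
      subst q.
      have pS : p \in S by apply: (subsetP XS); apply: (subsetP sub); rewrite ee set21.
      by move: (iso p pS); rewrite setUC -ee eE.
    move/negP: (H e eE); apply; apply/subsetP => w we.
    rewrite !inE (subsetP sub w we) andbT.
    apply/negP => /eqP wx; by move: xe; rewrite -wx we.
  rewrite e1 Ht; last by apply: setSD.
  congr (_ <= _).
  apply/esym; rewrite (bigID (pred1 x)) /=.
  rewrite big1 ?add0n; last by move=> y /andP [_ /eqP ->]; rewrite eqxx.
  apply: eq_big => [y|y /andP [_ /negbTE ->]] //.
  by rewrite !inE andbC.
- have [l [t Ht]] : thrS E (S :\ x).
    apply: IH; by rewrite (cardsD1 x S) xS add1n ltnS in ltS.
  pose n0 := #|T|.
  exists (fun y => if y == x then n0.+1 * t + n0 else n0.+1 * l y + 1), (n0.+1 * t + n0).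
  move=> X XS.
  case: (boolP (x \in X)) => xX.
    case: (eqVneq (X :\ x) set0) => [X1 | /set0Pn [y]].
      have -> : X = [set x].
        apply/setP => w; rewrite inE; apply/idP/eqP => [wX|->//].
        apply/eqP; apply/negPn/negP => wx.
        by move: (in_set0 w); rewrite -X1 !inE wx wX.
      rewrite big_set1 eqxx leqnn; apply/forall_inP => e eE; apply/negP => sub.
      by have := subset_leq_card sub; rewrite (simpleP sE eE) cards1.
    rewrite !inE => /andP [yx yX].
    have -> : independent E X = false.
      apply/negbTE; apply/negP => /forall_inP H.
      move/negP: (H _ (dom y (subsetP XS y yX) yx)); apply.
      apply/subsetP => w; rewrite !inE => /orP [/eqP->|/eqP->] //.
    rewrite (big_setD1 x) //= (big_setD1 y) /=; last by rewrite !inE yx.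
    rewrite eqxx (negbTE yx).
    apply/esym/negbTE; rewrite -ltnNge; lia.
  have XS' : X \subset S :\ x.
    apply/subsetP => w wX; rewrite !inE (subsetP XS w wX) andbT.
    apply/negP => /eqP wx; by move: xX; rewrite -wx wX.
  rewrite Ht //.
  have -> : \sum_(y in X) (if y == x then n0.+1 * t + n0 else n0.+1 * l y + 1) =
            \sum_(y in X) (n0.+1 * l y + 1).
    apply: eq_bigr => y yX; case: eqP => // yx; by move: xX; rewrite -yx yX.
  rewrite big_split /= -big_distrr /= sum1_card.
  have cX : #|X| <= n0 := max_card X.
  set s := \sum_(i in X) l i.
  case: (leqP s t) => h.
       apply/esym; apply: leq_add => //; by rewrite leq_mul2l h orbT.
  apply/esym/negbTE; rewrite -ltnNge.
  have : n0.+1 * t.+1 <= n0.+1 * s by rewrite leq_mul2l h orbT.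
  rewrite mulnS; lia.
Qed.

Lemma noAP4_thr E : simple_graph E -> noAP4 E -> threshold E.
Proof.
move=> sE nE; have [l [t Ht]] := noAP4_thrS sE nE setT.
exists l, t => X; exact: Ht (subsetT X).
Qed.

End Aux.

Theorem theorem4p5 (T : finType) (E F : {set {set T}}) (e : {set T}) :
  simple_graph E -> threshold E -> F \subset E -> threshold (E :\: F) ->
  degree_minimal E F e -> threshold (E :\ e).
Proof.
move=> sE thE FE thF [eF [u [v [ee degu degv]]]].
have nE := thr_noAP4 sE thE.
have sF : simple_graph (E :\: F) := simple_sub sE (subsetDl E F).
have nF := thr_noAP4 sF thF.
have se : simple_graph (E :\ e) := simple_sub sE (subsetDl E [set e]).
apply: noAP4_thr se _.
subst e.
have uvE : [set u; v] \in E := subsetP FE _ eF.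
have uv := edge_neq sE uvE.
have core : forall b d, b != d -> [set u; b] \in E :\ [set u; v] ->
    [set v; d] \in E :\ [set u; v] -> [set b; d] \notin E :\ [set u; v] -> False.
  move=> b d bd; rewrite !inE => /andP [ube ub] /andP [vde vd] nbd.
  have ub' := edge_neq sE ub. have vd' := edge_neq sE vd.
  have bv : b != v.
    apply/negP => /eqP bv; subst b; by rewrite eqxx in ube.
  have du : d != u.
    apply/negP => /eqP du; subst d; by rewrite setUC eqxx in vde.
  have bdE : [set b; d] \notin E.
    have bde : [set b; d] != [set u; v].
      apply/negP => /eqP h; have : b \in [set u; v] by rewrite -h set21.
      by rewrite !inE eq_sym (negbTE ub') (negbTE bv).
    by move: nbd; rewrite bde.
  case: (boolP ([set u; b] \in F)) => ubF.
    have h1 := degv b ubF.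
    have db : d != b by rewrite eq_sym.
    have vb : v != b by rewrite eq_sym.
    have := key sE nE (in_setT v) (in_setT b) (in_setT d) vd bdE db vb.
    by rewrite -!deg_NS // ltnNge h1.
  case: (boolP ([set v; d] \in F)) => vdF.
    have h1 : deg E u <= deg E d by apply: degu; exists [set v; d] => //; rewrite set22.
    have udn : u != d by rewrite eq_sym.
    have dbE : [set d; b] \notin E by rewrite setUC.
    have := key sE nE (in_setT u) (in_setT d) (in_setT b) ub dbE bd udn.
    by rewrite -!deg_NS // ltnNge h1.
  apply: (nF u b v d) => //.
  + by rewrite !inE ubF ub.
  + by rewrite !inE vdF vd.
  + by rewrite !inE eF.
  + by rewrite !inE (negbTE bdE) andbF.
have core2 : forall a b c d, a != c -> [set a; b] \in E :\ [set u; v] ->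
    [set c; d] \in E :\ [set u; v] -> [set b; d] \notin E :\ [set u; v] ->
    b != d -> [set a; c] = [set u; v] -> False.
  move=> a b c d ac ab cd nbd bd h.
  have : a \in [set u; v] by rewrite -h set21.
  have : c \in [set u; v] by rewrite -h set22.
  rewrite !inE => /orP [/eqP cu|/eqP cv] /orP [/eqP au|/eqP av].
  - by subst; rewrite eqxx in ac.
  - subst; apply: (core d b) => //; by rewrite ?(eq_sym d) // setUC.
  - subst; exact: (core b d).
  - by subst; rewrite eqxx in ac.
move=> a b c d ac bd ab cd nac nbd.
case: (eqVneq [set a; c] [set u; v]) => [h|h1].
  exact: (core2 a b c d).
case: (eqVneq [set b; d] [set u; v]) => [h|h2].
  apply: (core2 b a d c) => //; by rewrite setUC.
apply: (nE a b c d) => //.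
- by move: ab; rewrite inE => /andP [].
- by move: cd; rewrite inE => /andP [].
- by move: nac; rewrite !inE h1.
- by move: nbd; rewrite !inE h2.
Qed.
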